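(* Let $\bar n_s>0$, $\eta\in[0,1]$, $\bar n_B\ge0$, and $N=(1-\eta)\bar n_B$. Alice prepares a two-mode squeezed vacuum state $\sum_{k\ge0}\sqrt{\frac{\bar n_s^k}{(1+\bar n_s)^{k+1}}}|k\rangle_A|k\rangle_R$ and measures the reference mode $R$ with an on-off detector $c_i$. Under hypothesis $H_1$ the signal mode $A$ is sent through the lossy thermal-noise bosonic channel with transmittance $\eta$ and environment mean photon number $\bar n_B$ and then measured with an on-off detector $c_s$; under $H_0$ the signal is discarded and $c_s$ measures the channel output with vacuum input (a thermal state of mean photon number $N$). Let $p^{m}_{\mathrm{CC}}$ be the probability that both $c_i$ and $c_s$ click under $H_m$. Then $$p^0_{\mathrm{CC}}=\Big(1-\frac{1}{1+\bar n_s}\Big)\Big(1-\frac{1}{1+N}\Big),\qquad p^1_{\mathrm{CC}}\ge\Big(1-\frac{1}{1+\bar n_s}\Big)\Big(1-\frac{1}{1+N}+\frac{\eta}{(1+N)^2}\Big).$$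
   Context: An on-off detector clicks on a single-mode state $\hat\rho$ with probability $1-\langle0|\hat\rho|0\rangle$ and, upon clicking, projects onto the span of Fock states $|k\rangle$, $k\ge1$. The lossy thermal-noise bosonic channel with transmittance $\eta$ and environment mean photon number $\bar n_B$ is a beamsplitter of transmittance $\eta$ mixing the input mode with an environment mode in the thermal state $\sum_{k\ge0}\frac{\bar n_B^k}{(1+\bar n_B)^{k+1}}|k\rangle\langle k|$, with the environment output traced out. *)

(* Defs.v *)
(* concrete reals R, with Coquelicot's total [Series] for
   infinite sums.  Everything is written in the Fock (number) basis; all
   matrix elements involved are real (real beamsplitter convention). *)
From Stdlib Require Import Reals Arith.
From Coquelicot Require Import Coquelicot.
Open Scope R_scope.

Definition binom (n k : nat) : R :=
  INR (fact n) / (INR (fact k) * INR (fact (n - k)%nat)).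

(* Fock-basis matrix element <p,q| U_eta |n,m> of the beamsplitter of
   transmittance eta acting on (signal mode, environment mode), with the
   convention  U a^dag U^dag = sqrt eta a^dag + sqrt(1-eta) b^dag,
               U b^dag U^dag = - sqrt(1-eta) a^dag + sqrt eta b^dag. *)
Definition bs (eta : R) (p q n m : nat) : R :=
  if Nat.eqb (p + q)%nat (n + m)%nat then
    sqrt (INR (fact p * fact q)%nat / INR (fact n * fact m)%nat) *
    sum_f_R0 (fun i =>
      if andb (Nat.leb i p) (Nat.leb (p - i)%nat m) then
        binom n i * binom m (p - i)%nat * (-1) ^ (p - i)%nat *
        sqrt eta ^ (i + (m - (p - i)))%nat * sqrt (1 - eta) ^ ((n - i) + (p - i))%nat
      else 0) n
  else 0.

(* Three-mode (R, A, E) real operators given by their Fock matrix elements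
   < r a e | rho | r' a' e' >. *)
Definition Op3 := nat -> nat -> nat -> nat -> nat -> nat -> R.

Definition tmsv_amp (ns : R) (k : nat) : R := sqrt (ns ^ k / (1 + ns) ^ (k + 1)%nat).

(* <r a| psi><psi |r' a'> for psi = sum_k tmsv_amp k |k>_A|k>_R *)
Definition tmsv (ns : R) (r a r' a' : nat) : R :=
  (if Nat.eqb r a then tmsv_amp ns r else 0) *
  (if Nat.eqb r' a' then tmsv_amp ns r' else 0).

Definition thermal (nB : R) (e e' : nat) : R :=
  if Nat.eqb e e' then nB ^ e / (1 + nB) ^ (e + 1)%nat else 0.

Definition vac (a a' : nat) : R :=
  if andb (Nat.eqb a 0) (Nat.eqb a' 0) then 1 else 0.

Definition reduced_R (ns : R) (r r' : nat) : R :=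
  Series (fun a => tmsv ns r a r' a).

Definition init_H1 (ns nB : R) : Op3 :=
  fun r a e r' a' e' => tmsv ns r a r' a' * thermal nB e e'.

Definition init_H0 (ns nB : R) : Op3 :=
  fun r a e r' a' e' => reduced_R ns r r' * vac a a' * thermal nB e e'.

(* (I_R (x) U) rho (I_R (x) U)^dag ; the sums over input photon numbers are
   finite by photon-number conservation of the beamsplitter. *)
Definition apply_bs (eta : R) (rho : Op3) : Op3 :=
  fun r a e r' a' e' =>
    sum_f_R0 (fun n =>
      sum_f_R0 (fun n' =>
        bs eta a e n (a + e - n)%nat * rho r n (a + e - n)%nat r' n' (a' + e' - n')%nat *
        bs eta a' e' n' (a' + e' - n')%nat) (a' + e')%nat) (a + e)%nat.

(* probability that both on-off detectors (on R and on A) click: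
   Tr[(Pi_R (x) Pi_A (x) I_E) rho], Pi = projector onto span{|k>, k>=1};
   the environment E is traced out. *)
Definition p_CC (rho : Op3) : R :=
  Series (fun r => Series (fun a => Series (fun e =>
    if andb (Nat.leb 1 r) (Nat.leb 1 a) then rho r a e r a e else 0))).

(* Main.v *)
Require Import Defs.
From Stdlib Require Import Reals Lra Lia Arith FunctionalExtensionality.
From Coquelicot Require Import Coquelicot.
Open Scope R_scope.


Ltac rring := match goal with |- ?a = ?b => change (@eq R a b); ring end.

Lemma is_series_lim (a : nat -> R) (l : R) : is_series a l <-> is_lim_seq (sum_n a) l.
Proof. split; intro H; exact H. Qed.

Lemma snS (f : nat -> R) n : sum_n f (S n) = sum_n f n + f (S n).
Proof. rewrite sum_Sn. reflexivity. Qed.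

Lemma sn0 (f : nat -> R) : sum_n f 0 = f 0%nat.
Proof. apply sum_O. Qed.

Lemma sn_ext (f g : nat -> R) n : (forall i, (i <= n)%nat -> f i = g i) -> sum_n f n = sum_n g n.
Proof. apply sum_n_ext_loc. Qed.

Lemma sn_plus (f g : nat -> R) n : @eq R (sum_n (fun i => f i + g i) n) (sum_n f n + sum_n g n).
Proof. induction n. rewrite !sn0; auto. rewrite !snS, IHn. ring. Qed.

Lemma sn_scal (c : R) (f : nat -> R) n : @eq R (sum_n (fun i => c * f i) n) (c * sum_n f n).
Proof. induction n. rewrite !sn0; auto. rewrite !snS, IHn. ring. Qed.

Lemma sn_first (f : nat -> R) n : @eq R (sum_n f (S n)) (f 0%nat + sum_n (fun i => f (S i)) n).
Proof. induction n. rewrite snS, !sn0. auto. rewrite snS, IHn, snS. ring. Qed.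

Lemma sn_nonneg (f : nat -> R) n : (forall i, 0 <= f i) -> 0 <= sum_n f n.
Proof. intros H; induction n. rewrite sn0; auto. rewrite snS. specialize (H (S n)). lra. Qed.

Lemma sn_le (f g : nat -> R) n : (forall i, (i <= n)%nat -> f i <= g i) -> sum_n f n <= sum_n g n.
Proof. intros H; induction n. rewrite !sn0; auto. rewrite !snS.
  assert (sum_n f n <= sum_n g n) by (apply IHn; intros; apply H; lia).
  specialize (H (S n) (le_n _)). lra. Qed.

Lemma sn_mono (f : nat -> R) n m : (forall i, 0 <= f i) -> (n <= m)%nat -> sum_n f n <= sum_n f m.
Proof. intros H Hm; induction Hm. lra. rewrite snS. specialize (H (S m)). lra. Qed.

Lemma sn_term_le (f : nat -> R) n i : (forall i, 0 <= f i) -> (i <= n)%nat -> f i <= sum_n f n.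
Proof. intros H Hi; induction n.
  assert (i = 0%nat) by lia. subst. rewrite sn0. lra.
  rewrite snS. destruct (Nat.eq_dec i (S n)). subst. pose proof (sn_nonneg f n H). lra.
  assert (f i <= sum_n f n) by (apply IHn; lia). specialize (H (S n)). lra. Qed.

Lemma sn_zero_above (f : nat -> R) n m : (forall i, (n < i)%nat -> f i = 0) -> (n <= m)%nat -> @eq R (sum_n f m) (sum_n f n).
Proof. intros H Hm; induction Hm as [|m Hm IH]. auto. rewrite snS, IH, H by lia. ring. Qed.

Lemma sn_single (f : nat -> R) r n : (forall i, i <> r -> f i = 0) ->
  @eq R (sum_n f n) (if (r <=? n)%nat then f r else 0).
Proof. intros H; induction n.
  rewrite sn0. destruct r. simpl; auto. simpl. apply H. lia.
  rewrite snS, IHn. destruct (Nat.leb_spec r n); destruct (Nat.leb_spec r (S n)); try lia.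
  rewrite (H (S n)) by lia. ring.
  assert (r = S n) by lia. subst. ring.
  rewrite (H (S n)) by lia. ring. Qed.

Lemma sn_zero (f : nat -> R) n : (forall i, f i = 0) -> @eq R (sum_n f n) 0.
Proof. intros H; induction n. rewrite sn0; auto. rewrite snS, IHn, H. ring. Qed.


Lemma lim_le_const (u : nat -> R) (l B : R) : is_lim_seq u l -> (forall n, u n <= B) -> l <= B.
Proof. intros Hl HB. assert (Rbar_le l B).
  { apply (is_lim_seq_le u (fun _ => B)); auto. apply is_lim_seq_const. } exact H. Qed.

Lemma lim_ge (u v : nat -> R) (l1 l2 : R) : is_lim_seq u l1 -> is_lim_seq v l2 -> (forall n, u n <= v n) -> l1 <= l2.
Proof. intros H1 H2 H. assert (Rbar_le l1 l2) by (apply (is_lim_seq_le u v); auto). exact H0. Qed.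

Lemma lim_incr_ge (u : nat -> R) (l : R) : is_lim_seq u l -> (forall n, u n <= u (S n)) -> forall n, u n <= l.
Proof. intros Hl Hi n.
  apply (lim_ge (fun _ => u n) (fun k => u (k + n)%nat)). apply is_lim_seq_const.
  apply (is_lim_seq_incr_n u n l). auto.
  intros k. induction k. simpl. lra. simpl. specialize (Hi (k + n)%nat). lra. Qed.

Lemma nonneg_bounded (f : nat -> R) B : (forall i, 0 <= f i) -> (forall n, sum_n f n <= B) ->
  ex_series f /\ Series f <= B /\ (forall n, sum_n f n <= Series f) /\ 0 <= Series f.
Proof. intros H0 HB.
  assert (Hinc : forall n, sum_n f n <= sum_n f (S n)) by (intros; rewrite snS; specialize (H0 (S n)); lra).
  destruct (ex_finite_lim_seq_incr _ B Hinc HB) as [l Hl].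
  assert (Hs : is_series f l) by (apply is_series_lim; auto).
  assert (HS : Series f = l) by (apply is_series_unique; auto).
  assert (Hp : forall n, sum_n f n <= l) by (apply lim_incr_ge; auto).
  rewrite HS. split. exists l; auto. split. apply (lim_le_const _ _ _ Hl HB).
  split. auto. specialize (Hp 0%nat). rewrite sn0 in Hp. specialize (H0 0%nat). lra. Qed.

Lemma series_partial_le (f : nat -> R) l : (forall i, 0 <= f i) -> is_series f l -> forall n, sum_n f n <= l.
Proof. intros H0 Hs. apply lim_incr_ge. apply is_series_lim; auto.
  intros; rewrite snS; specialize (H0 (S n)); lra. Qed.

Lemma C_n0 n : Binomial.C n 0 = 1.
Proof. unfold Binomial.C. rewrite Nat.sub_0_r. simpl. field. apply INR_fact_neq_0. Qed.
Lemma C_nn n : Binomial.C n n = 1.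
Proof. unfold Binomial.C. rewrite Nat.sub_diag. simpl. field. apply INR_fact_neq_0. Qed.



Definition Dg (w : nat -> nat -> R) M : R := sum_n (fun a => w a (M - a)%nat) M.
Definition Tr (w : nat -> nat -> R) K : R := sum_n (fun a => sum_n (w a) (K - a)%nat) K.

Lemma tri (w : nat -> nat -> R) K : @eq R (sum_n (Dg w) K) (Tr w K).
Proof. induction K.
  - rewrite sn0. unfold Dg, Tr. rewrite !sn0. simpl. auto.
  - rewrite snS, IHK. unfold Tr, Dg. rewrite !snS. rewrite Nat.sub_diag, sn0.
    rewrite (sn_ext (fun a => sum_n (w a) (S K - a)) (fun a => sum_n (w a) (K - a) + w a (S (K - a)))).
    rewrite sn_plus. rewrite (sn_ext (fun a => w a (S K - a)%nat) (fun a => w a (S (K - a)))). ring.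
    intros; f_equal; lia.
    intros. replace (S K - i)%nat with (S (K - i)) by lia. apply snS.
Qed.

Lemma rows_diag (w : nat -> nat -> R) (L : R) : (forall a e, 0 <= w a e) ->
  is_series (Dg w) L -> (forall a, ex_series (w a)) /\ is_series (fun a => Series (w a)) L.
Proof. intros H0 HL.
  assert (HD0 : forall M, 0 <= Dg w M) by (intros; apply sn_nonneg; auto).
  assert (HT : forall K, Tr w K <= L) by (intros; rewrite <- tri; apply series_partial_le; auto).
  assert (HT0 : forall K, forall i, 0 <= sum_n (w i) (K - i)) by (intros; apply sn_nonneg; auto).
  assert (Hsq : forall A E, sum_n (fun a => sum_n (w a) E) A <= L).
  { intros A E. apply Rle_trans with (Tr w (A + E)); auto. unfold Tr.
    apply Rle_trans with (sum_n (fun a => sum_n (w a) (A + E - a)) A).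
    apply sn_le. intros. apply sn_mono; auto; lia.
    apply sn_mono; auto; lia. }
  assert (Hrow : forall a, ex_series (w a) /\ Series (w a) <= L /\ (forall n, sum_n (w a) n <= Series (w a)) /\ 0 <= Series (w a)).
  { intros a. apply nonneg_bounded; auto. intros n.
    apply Rle_trans with (sum_n (fun a' => sum_n (w a') n) a); auto.
    apply (sn_term_le (fun a' => sum_n (w a') n)). intros; apply sn_nonneg; auto. lia. }
  split. intros a; apply Hrow.
  assert (Hlim : forall A, is_lim_seq (fun E => sum_n (fun a => sum_n (w a) E) A) (sum_n (fun a => Series (w a)) A)).
  { intros A. induction A.
    - apply (is_lim_seq_ext (sum_n (w 0%nat))). intros; rewrite sn0; auto.
      rewrite sn0. apply is_series_lim. apply Series_correct. apply Hrow.
    - apply (is_lim_seq_ext (fun E => sum_n (fun a => sum_n (w a) E) A + sum_n (w (S A)) E)).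
      intros; rewrite snS; auto. rewrite snS. apply is_lim_seq_plus'. auto.
      apply is_series_lim. apply Series_correct. apply Hrow. }
  assert (HS : forall A, sum_n (fun a => Series (w a)) A <= L).
  { intros A. apply (lim_le_const _ _ _ (Hlim A)). auto. }
  destruct (nonneg_bounded (fun a => Series (w a)) L) as [Hex [HSL [Hpart _]]]; auto.
  intros; apply Hrow.
  apply Series_correct in Hex.
  replace L with (Series (fun a => Series (w a))). auto.
  apply Rle_antisym. auto.
  apply (lim_ge (sum_n (Dg w)) (sum_n (fun a => Series (w a)))).
  apply is_series_lim; auto. apply is_series_lim; auto.
  intros K. rewrite tri. unfold Tr. apply sn_le. intros. apply Hrow.
Qed.


Definition prev (f : nat -> R) (p : nat) : R := match p with O => 0 | S k => f k end.
Definition mulL (s t : R) (f : nat -> R) p := s * prev f p + t * f p.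
Definition mulL2 (s t : R) (f : nat -> R) p := - t * prev f p + s * f p.
Definition delta (p : nat) : R := if (p =? 0)%nat then 1 else 0.
Definition alpha (s t : R) n i := if (i <=? n)%nat then Binomial.C n i * s ^ i * t ^ (n - i) else 0.
Definition beta (s t : R) m j := if (j <=? m)%nat then Binomial.C m j * (-1) ^ j * t ^ j * s ^ (m - j) else 0.
Definition conv (f g : nat -> R) p : R := sum_n (fun i => f i * g (p - i)%nat) p.
Definition cc s t n m := conv (alpha s t n) (beta s t m).
Definition dL (s t : R) (D : nat) (g : nat -> R) p := s * INR (S p) * g (S p) + t * (INR D - INR p) * g p.
Definition dL2 (s t : R) (D : nat) (g : nat -> R) p := - t * INR (S p) * g (S p) + s * (INR D - INR p) * g p.
Definition IP (D : nat) (f g : nat -> R) : R := sum_n (fun p => INR (fact p) * INR (fact (D - p)) * f p * g p) D.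

Section Alg.
Variables s t : R.

Lemma alpha_S n : alpha s t (S n) = mulL s t (alpha s t n).
Proof. apply functional_extensionality; intros p. unfold mulL, alpha, prev. destruct p.
  - simpl. rewrite !C_n0, Nat.sub_0_r. ring.
  - destruct (Nat.leb_spec (S p) (S n)); destruct (Nat.leb_spec p n); try lia.
    + destruct (Nat.leb_spec (S p) n).
      * rewrite <- pascal by lia. replace (n - p)%nat with (S (n - S p)) by lia.
        replace (S n - S p)%nat with (S (n - S p)) by lia. simpl. ring.
      * assert (p = n) by lia. subst. rewrite !C_nn, !Nat.sub_diag. simpl. ring.
    + destruct (Nat.leb_spec (S p) n); try lia. ring.
Qed.

Lemma beta_S m : beta s t (S m) = mulL2 s t (beta s t m).
Proof. apply functional_extensionality; intros p. unfold mulL2, beta, prev. destruct p.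
  - simpl. rewrite !C_n0, ?Nat.sub_0_r. ring.
  - destruct (Nat.leb_spec (S p) (S m)); destruct (Nat.leb_spec p m); try lia.
    + destruct (Nat.leb_spec (S p) m).
      * rewrite <- pascal by lia. replace (m - p)%nat with (S (m - S p)) by lia.
        replace (S m - S p)%nat with (S (m - S p)) by lia. simpl. ring.
      * assert (p = m) by lia. subst. rewrite !C_nn, !Nat.sub_diag. simpl. ring.
    + destruct (Nat.leb_spec (S p) m); try lia. ring.
Qed.

Lemma conv_mulL f g : conv (mulL s t f) g = mulL s t (conv f g).
Proof. apply functional_extensionality; intros p. unfold conv, mulL. destruct p.
  - rewrite !sn0. simpl. ring.
  - rewrite (sn_ext _ (fun i => s * (prev f i * g (S p - i)%nat) + t * (f i * g (S p - i)%nat))).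
    rewrite sn_plus, !sn_scal. rewrite sn_first. simpl prev. f_equal. f_equal. rewrite Rmult_0_l, Rplus_0_l. reflexivity.
    intros; ring.
Qed.

Lemma conv_mulL2 f g : conv f (mulL2 s t g) = mulL2 s t (conv f g).
Proof. apply functional_extensionality; intros p. unfold conv, mulL2. destruct p.
  - rewrite !sn0. simpl. ring.
  - rewrite (sn_ext _ (fun i => (-t) * (f i * prev g (S p - i)%nat) + s * (f i * g (S p - i)%nat))).
    rewrite sn_plus, !sn_scal. rewrite snS. rewrite Nat.sub_diag. simpl prev at 3.
    rewrite (sn_ext (fun i => f i * prev g (S p - i)%nat) (fun i => f i * g (p - i)%nat)). simpl prev. rring.
    intros. replace (S p - i)%nat with (S (p - i)) by lia. reflexivity.
    intros; ring.
Qed.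

Lemma cc_S1 n m : cc s t (S n) m = mulL s t (cc s t n m).
Proof. unfold cc. rewrite alpha_S. apply conv_mulL. Qed.
Lemma cc_S2 n m : cc s t n (S m) = mulL2 s t (cc s t n m).
Proof. unfold cc. rewrite beta_S. apply conv_mulL2. Qed.

Lemma cc00 p : cc s t 0 0 p = delta p.
Proof. unfold cc, conv. rewrite (sn_single _ 0).
  simpl. unfold alpha, beta, delta. rewrite Nat.sub_0_r. destruct p; simpl. rewrite !C_n0. ring. ring.
  intros i Hi. unfold alpha. destruct (Nat.leb_spec i 0). lia. ring.
Qed.

Lemma cc_supp n m p : (n + m < p)%nat -> cc s t n m p = 0.
Proof. intros H. unfold cc, conv. apply sn_zero. intros i. unfold alpha, beta.
  destruct (Nat.leb_spec i n); destruct (Nat.leb_spec (p - i) m); try lia; ring. Qed.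

Hypothesis Hst : s * s + t * t = 1.

Lemma K1 D f p : dL s t (S D) (mulL s t f) p = f p + mulL s t (dL s t D f) p.
Proof. transitivity ((s * s + t * t) * f p + mulL s t (dL s t D f) p).
  unfold dL, mulL, prev. destruct p; rewrite ?S_INR; simpl; ring.
  rewrite Hst; ring. Qed.

Lemma K2 D f p : dL s t (S D) (mulL2 s t f) p = mulL2 s t (dL s t D f) p.
Proof. unfold dL, mulL2, prev. destruct p; rewrite ?S_INR; simpl; ring. Qed.

Lemma K3 D f p : dL2 s t (S D) (mulL2 s t f) p = f p + mulL2 s t (dL2 s t D f) p.
Proof. transitivity ((s * s + t * t) * f p + mulL2 s t (dL2 s t D f) p).
  unfold dL2, mulL2, prev. destruct p; rewrite ?S_INR; simpl; ring.
  rewrite Hst; ring. Qed.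

Lemma dL_cc0 m p : dL s t m (cc s t 0 m) p = 0.
Proof. revert p. induction m; intros p.
  - unfold dL. rewrite !cc00. unfold delta. destruct p; simpl; ring.
  - rewrite cc_S2. rewrite K2. unfold mulL2, prev. destruct p; rewrite ?IHm; ring.
Qed.

Lemma dL_cc n m p : dL s t (n + m) (cc s t n m) p = INR n * cc s t (n - 1) m p.
Proof. revert p. induction n; intros p.
  - simpl. rewrite dL_cc0. ring.
  - change (S n + m)%nat with (S (n + m)). rewrite (cc_S1 n m). rewrite K1 by exact Hst.
    assert (E : forall q, mulL s t (dL s t (n+m) (cc s t n m)) q = INR n * mulL s t (cc s t (n-1) m) q)
      by (intros q; unfold mulL, prev; destruct q; rewrite ?IHn; ring).
    rewrite E. destruct n.
    + simpl. ring.
    + replace (S n - 1)%nat with n by lia. replace (S (S n) - 1)%nat with (S n) by lia.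
      rewrite <- cc_S1. rewrite (S_INR (S n)). ring.
Qed.

Lemma dL2_cc0 m p : dL2 s t m (cc s t 0 m) p = INR m * cc s t 0 (m - 1) p.
Proof. revert p. induction m; intros p.
  - unfold dL2. rewrite !cc00. unfold delta. destruct p; simpl; ring.
  - rewrite (cc_S2 0 m). rewrite K3 by exact Hst.
    assert (E : forall q, mulL2 s t (dL2 s t m (cc s t 0 m)) q = INR m * mulL2 s t (cc s t 0 (m-1)) q)
      by (intros q; unfold mulL2, prev; destruct q; rewrite ?IHm; ring).
    rewrite E. destruct m.
    + simpl. ring.
    + replace (S m - 1)%nat with m by lia. replace (S (S m) - 1)%nat with (S m) by lia.
      rewrite <- cc_S2. rewrite (S_INR (S m)). ring.
Qed.

End Alg.


Lemma fact_S_INR n : INR (fact (S n)) = INR (S n) * INR (fact n).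
Proof. rewrite fact_simpl, mult_INR. auto. Qed.

Lemma fact_sub p D : (p <= D)%nat -> INR (fact (S D - p)) = (INR (S D) - INR p) * INR (fact (D - p)).
Proof. intros H. replace (S D - p)%nat with (S (D - p)) by lia. rewrite fact_S_INR.
  rewrite S_INR, S_INR, minus_INR by auto. ring. Qed.

Lemma A1 (a b : R) D f g : f (S D) = 0 -> IP (S D) (mulL a b f) g = IP D f (dL a b (S D) g).
Proof. intros Hf. unfold IP.
  rewrite (sn_ext _ (fun p => a * (INR (fact p) * INR (fact (S D - p)) * prev f p * g p) + b * (INR (fact p) * INR (fact (S D - p)) * f p * g p))) by (intros; unfold mulL; ring).
  rewrite sn_plus, !sn_scal.
  rewrite (sn_first (fun p => INR (fact p) * INR (fact (S D - p)) * prev f p * g p)).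
  rewrite (snS (fun p => INR (fact p) * INR (fact (S D - p)) * f p * g p)).
  rewrite (sn_ext (fun p => INR (fact p) * INR (fact (D - p)) * f p * dL a b (S D) g p)
     (fun p => a * (INR (fact (S p)) * INR (fact (S D - S p)) * prev f (S p) * g (S p)) + b * (INR (fact p) * INR (fact (S D - p)) * f p * g p))).
  rewrite sn_plus, !sn_scal. rewrite Hf. simpl prev. rring.
  intros p Hp. rewrite (fact_sub p D Hp). rewrite fact_S_INR. simpl prev. unfold dL.
  replace (S D - S p)%nat with (D - p)%nat by lia. ring.
Qed.

Lemma IP_scal D f g c : IP D f (fun p => c * g p) = c * IP D f g.
Proof. unfold IP. rewrite <- sn_scal. apply sn_ext. intros; ring. Qed.

Lemma cc_norm s t n m : s * s + t * t = 1 ->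
  IP (n + m) (cc s t n m) (cc s t n m) = INR (fact n) * INR (fact m).
Proof. intros Hst. induction n.
  - induction m.
    + unfold IP. simpl. rewrite sn0, cc00. unfold delta. simpl. ring.
    + change (0 + S m)%nat with (S m). change (0 + m)%nat with m in IHm.
      transitivity (IP (S m) (mulL2 s t (cc s t 0 m)) (cc s t 0 (S m))).
      rewrite <- cc_S2. reflexivity.
      unfold mulL2. change (IP (S m) (mulL (-t) s (cc s t 0 m)) (cc s t 0 (S m)) = INR (fact 0) * INR (fact (S m))).
      rewrite A1 by (apply cc_supp; lia).
      replace (dL (-t) s (S m) (cc s t 0 (S m))) with (fun p => INR (S m) * cc s t 0 m p).
      rewrite IP_scal, IHm. rewrite fact_S_INR. simpl. ring.
      apply functional_extensionality; intros p. symmetry.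
      change (dL2 s t (S m) (cc s t 0 (S m)) p = INR (S m) * cc s t 0 m p).
      rewrite dL2_cc0 by auto. simpl. rewrite Nat.sub_0_r. auto.
  - change (S n + m)%nat with (S (n + m)).
    transitivity (IP (S (n + m)) (mulL s t (cc s t n m)) (cc s t (S n) m)).
    rewrite <- cc_S1. reflexivity.
    rewrite A1 by (apply cc_supp; lia).
    replace (dL s t (S (n + m)) (cc s t (S n) m)) with (fun p => INR (S n) * cc s t n m p).
    rewrite IP_scal, IHn. rewrite fact_S_INR. ring.
    apply functional_extensionality; intros p. symmetry.
    change (dL s t (S n + m) (cc s t (S n) m) p = INR (S n) * cc s t n m p).
    rewrite dL_cc by auto. simpl. rewrite Nat.sub_0_r. auto.
Qed.


Lemma bs_cc eta a q r m : (a + q = r + m)%nat ->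
  bs eta a q r m = sqrt (INR (fact a * fact q) / INR (fact r * fact m)) * cc (sqrt eta) (sqrt (1 - eta)) r m a.
Proof. intros Hq. unfold bs. destruct (Nat.eqb_spec (a + q) (r + m)); try lia. f_equal.
  rewrite <- sum_n_Reals. set (s := sqrt eta). set (t := sqrt (1 - eta)).
  set (H := fun i => if (i <=? a)%nat then alpha s t r i * beta s t m (a - i) else 0).
  rewrite (sn_ext _ H).
  - rewrite <- (sn_zero_above H r (r + a)). rewrite (sn_zero_above H a (r + a)).
    unfold cc, conv. apply sn_ext. intros i Hi. unfold H. destruct (Nat.leb_spec i a); try lia. auto.
    intros i Hi. unfold H. destruct (Nat.leb_spec i a); try lia. auto. lia.
    intros i Hi. unfold H, alpha. destruct (Nat.leb_spec i r); try lia. destruct (i <=? a)%nat; ring. lia.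
  - intros i Hi. unfold H, alpha, beta, binom. destruct (Nat.leb_spec i r); try lia.
    destruct (Nat.leb_spec i a); destruct (Nat.leb_spec (a - i) m); simpl; try ring.
    rewrite !pow_add. unfold Binomial.C. ring.
Qed.

Lemma st1 eta : 0 <= eta <= 1 -> sqrt eta * sqrt eta + sqrt (1 - eta) * sqrt (1 - eta) = 1.
Proof. intros H. rewrite !sqrt_sqrt by lra. ring. Qed.

Lemma bs_unit eta r M : 0 <= eta <= 1 -> (r <= M)%nat ->
  @eq R (sum_n (fun a => bs eta a (M - a) r (M - r) ^ 2) M) 1.
Proof. intros He Hr. set (c := cc (sqrt eta) (sqrt (1 - eta)) r (M - r)).
  assert (HK : 0 < INR (fact r * fact (M - r))) by (apply lt_0_INR; pose proof (lt_O_fact r); pose proof (lt_O_fact (M - r)); lia).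
  rewrite (sn_ext _ (fun a => / INR (fact r * fact (M - r)) * (INR (fact a) * INR (fact (M - a)) * c a * c a))).
  rewrite sn_scal. change (sum_n (fun p => INR (fact p) * INR (fact (M - p)) * c p * c p) M) with (IP M c c).
  assert (E : IP M c c = INR (fact r) * INR (fact (M - r))).
  { unfold c. assert (forall m M', M' = (r + m)%nat -> IP M' (cc (sqrt eta) (sqrt (1 - eta)) r m) (cc (sqrt eta) (sqrt (1 - eta)) r m) = INR (fact r) * INR (fact m)) by (intros; subst; apply cc_norm; apply st1; auto).
    apply H; lia. }
  rewrite E.
  rewrite mult_INR in *. field. split; apply INR_fact_neq_0.
  intros a Ha. rewrite bs_cc by lia. fold c.
  assert (0 <= INR (fact a * fact (M - a)) / INR (fact r * fact (M - r))).
  { apply Rdiv_le_0_compat. apply pos_INR. auto. }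
  simpl. rewrite Rmult_1_r.
  replace (sqrt (INR (fact a * fact (M - a)) / INR (fact r * fact (M - r))) * c a *
    (sqrt (INR (fact a * fact (M - a)) / INR (fact r * fact (M - r))) * c a)) with
    (sqrt (INR (fact a * fact (M - a)) / INR (fact r * fact (M - r))) * sqrt (INR (fact a * fact (M - a)) / INR (fact r * fact (M - r))) * (c a * c a)) by ring.
  rewrite sqrt_sqrt by auto. rewrite !mult_INR. field. split; apply INR_fact_neq_0.
Qed.


Lemma series_shift (a : nat -> R) (l : R) r : is_series a l ->
  is_series (fun M => if (r <=? M)%nat then a (M - r)%nat else 0) l.
Proof. intros H. induction r.
  - apply (is_series_ext a). intros; simpl. rewrite Nat.sub_0_r. auto. auto.
  - apply is_series_decr_1. simpl.
    match goal with |- is_series _ ?L => replace L with l end. exact IHr.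
    change (l = l + - 0). ring.
Qed.

Lemma series_drop0 (R0 : nat -> R) (l : R) : is_series R0 l ->
  is_series (fun a => if (1 <=? a)%nat then R0 a else 0) (l - R0 0%nat).
Proof. intros H. apply is_series_decr_1. simpl.
  match goal with |- is_series _ ?L => replace L with (l - R0 0%nat) by (change (l - R0 0%nat = l - R0 0%nat + - 0); ring) end.
  apply (is_series_incr_1 R0). match goal with |- is_series _ ?L => replace L with l end. auto.
  change (l = l - R0 0%nat + R0 0%nat). ring.
Qed.

Lemma is_series_scal (c : R) (a : nat -> R) (l : R) : is_series a l -> is_series (fun n => c * a n) (c * l).
Proof. intros H. apply (is_series_scal_l c a l H). Qed.

Lemma NB (y : R) : 0 <= y < 1 -> forall r,
  is_series (fun k => Binomial.C (r + k) r * y ^ k) (/ (1 - y) ^ (S r)).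
Proof. intros Hy r. induction r.
  - apply (is_series_ext (fun k => y ^ k)). intros n; change (y ^ n = Binomial.C (0 + n) 0 * y ^ n). rewrite C_n0. ring.
    replace (/ (1 - y) ^ 1) with (/ (1 - y)) by (simpl; rewrite Rmult_1_r; auto).
    apply is_series_geom. rewrite Rabs_right; lra.
  - set (u := fun k => Binomial.C (S r + k) (S r) * y ^ k).
    set (v := fun k => Binomial.C (r + k) r * y ^ k).
    set (V := / (1 - y) ^ S r).
    assert (Hv0 : forall k, 0 <= v k).
    { intros k. unfold v. apply Rmult_le_pos. unfold Binomial.C. apply Rdiv_le_0_compat. apply pos_INR.
      apply Rmult_lt_0_compat; apply INR_fact_lt_0. apply pow_le; lra. }
    assert (Hu0 : forall k, 0 <= u k).
    { intros k. unfold u. apply Rmult_le_pos. unfold Binomial.C. apply Rdiv_le_0_compat. apply pos_INR.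
      apply Rmult_lt_0_compat; apply INR_fact_lt_0. apply pow_le; lra. }
    assert (Hrec : forall k, u (S k) = v (S k) + y * u k).
    { intros k. unfold u, v. change (S r + S k)%nat with (S (r + S k)). rewrite <- (pascal (r + S k) r) by lia.
      replace (S r + k)%nat with (r + S k)%nat by lia. simpl. ring. }
    assert (HU : forall K, @eq R (sum_n u (S K)) (sum_n v (S K) + y * sum_n u K)).
    { induction K. rewrite !snS, !sn0. rewrite Hrec.
      assert (u 0%nat = v 0%nat). { unfold u, v. rewrite !Nat.add_0_r, !C_nn. auto. } rewrite H. ring.
      rewrite (snS u (S K)), (snS v (S K)). rewrite IHK at 1. rewrite (snS u K), Hrec. ring. }
    assert (HVp : forall K, sum_n v K <= V) by (apply series_partial_le; auto).
    assert (Hb : forall K, sum_n u K <= V / (1 - y)).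
    { intros K. assert (sum_n u K <= sum_n u (S K)) by (rewrite snS; specialize (Hu0 (S K)); lra).
      rewrite HU in H. specialize (HVp (S K)). apply Rmult_le_reg_r with (1 - y). lra.
      unfold Rdiv. rewrite Rmult_assoc, Rinv_l by lra. nra. }
    destruct (nonneg_bounded u _ Hu0 Hb) as [Hex _].
    apply Series_correct in Hex. set (l := Series u) in *.
    assert (H1 : is_lim_seq (fun K => sum_n u (S K)) l).
    { apply (is_lim_seq_incr_1 (sum_n u) l). apply is_series_lim. auto. }
    assert (H2 : is_lim_seq (fun K => sum_n u (S K)) (V + y * l)).
    { apply (is_lim_seq_ext (fun K => sum_n v (S K) + y * sum_n u K)). intros; symmetry; apply HU.
      apply is_lim_seq_plus'. apply (is_lim_seq_incr_1 (sum_n v) V). apply is_series_lim. auto.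
      apply (is_lim_seq_scal_l _ y l). apply is_series_lim. auto. }
    assert (Hl : l = V + y * l).
    { apply is_lim_seq_unique in H1. apply is_lim_seq_unique in H2. rewrite H1 in H2. injection H2. auto. }
    replace (/ (1 - y) ^ S (S r)) with l. auto.
    assert (l = V / (1 - y)). { apply Rmult_eq_reg_r with (1 - y). unfold Rdiv. rewrite Rmult_assoc, Rinv_l by lra. lra. lra. }
    rewrite H. unfold V. simpl. field. repeat split; try (apply pow_nonzero); lra.
Qed.


Definition th (nB : R) (k : nat) : R := nB ^ k / (1 + nB) ^ (k + 1)%nat.
Definition wr eta nB r a e : R :=
  if (r <=? a + e)%nat then bs eta a e r (a + e - r)%nat ^ 2 * th nB (a + e - r)%nat else 0.

Lemma th_eq nB k : 0 <= nB -> th nB k = / (1 + nB) * (nB / (1 + nB)) ^ k.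
Proof. intros H. unfold th, Rdiv. rewrite Rpow_mult_distr, pow_inv, pow_add. simpl. field.
  repeat split; try apply pow_nonzero; lra. Qed.

Lemma th_nonneg nB k : 0 <= nB -> 0 <= th nB k.
Proof. intros H. unfold th. apply Rdiv_le_0_compat. apply pow_le; lra. apply pow_lt; lra. Qed.

Lemma x_bound nB : 0 <= nB -> 0 <= nB / (1 + nB) < 1.
Proof. intros H. split. apply Rdiv_le_0_compat; lra. apply Rmult_lt_reg_r with (1 + nB). lra.
  unfold Rdiv. rewrite Rmult_assoc, Rinv_l by lra. lra. Qed.

Lemma th_geo nB : 0 <= nB -> is_series (th nB) 1.
Proof. intros H. apply (is_series_ext (fun k => / (1 + nB) * (nB / (1 + nB)) ^ k)).
  intros; symmetry; apply th_eq; auto.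
  assert (E : / (1 + nB) * / (1 - nB / (1 + nB)) = 1) by (field; split; lra).
  assert (H1 : is_series (fun k => / (1 + nB) * (nB / (1 + nB)) ^ k) (/ (1 + nB) * / (1 - nB / (1 + nB)))).
  apply (is_series_scal _ (fun k => (nB / (1 + nB)) ^ k)). apply is_series_geom. pose proof (x_bound nB H). rewrite Rabs_right; lra.
  rewrite E in H1. exact H1. Qed.

Lemma wr_nonneg eta nB r a e : 0 <= nB -> 0 <= wr eta nB r a e.
Proof. intros H. unfold wr. destruct (r <=? a + e)%nat. apply Rmult_le_pos. apply pow2_ge_0.
  apply th_nonneg; auto. lra. Qed.

Lemma Dg_wr eta nB r M : 0 <= eta <= 1 ->
  Dg (wr eta nB r) M = if (r <=? M)%nat then th nB (M - r)%nat else 0.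
Proof. intros He. unfold Dg, wr.
  rewrite (sn_ext _ (fun a => if (r <=? M)%nat then th nB (M - r) * bs eta a (M - a) r (M - r) ^ 2 else 0)).
  destruct (Nat.leb_spec r M).
  - rewrite sn_scal, bs_unit by auto. ring.
  - apply sn_zero. auto.
  - intros a Ha. replace (a + (M - a))%nat with M by lia. destruct (r <=? M)%nat; auto. ring.
Qed.

Lemma pow_sq (y : R) r : (y ^ r) ^ 2 = (y ^ 2) ^ r.
Proof. rewrite <- !pow_mult. rewrite Nat.mul_comm. auto. Qed.

Lemma sq_helper a u w r k : 0 <= a -> 0 <= u -> 0 <= w ->
  (sqrt a * (sqrt u ^ r * sqrt w ^ k)) ^ 2 = a * (u ^ r * w ^ k).
Proof. intros. rewrite !Rpow_mult_distr, !pow_sq, !pow2_sqrt by auto. auto. Qed.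

Definition R0v eta nB r := (1 - eta) ^ r * / (1 + nB) * / (1 - eta * (nB / (1 + nB))) ^ (S r).

Lemma wr0 eta nB r : 0 <= eta <= 1 -> 0 <= nB -> is_series (wr eta nB r 0) (R0v eta nB r).
Proof. intros He HnB.
  set (x := nB / (1 + nB)). pose proof (x_bound nB HnB) as Hx. fold x in Hx.
  set (v := fun k => (1 - eta) ^ r * / (1 + nB) * (Binomial.C (r + k) r * (eta * x) ^ k)).
  apply (is_series_ext (fun e => if (r <=? e)%nat then v (e - r)%nat else 0)).
  - intros e. match goal with |- ?a = ?b => change (@eq R a b) end. unfold wr. change (0 + e)%nat with e. destruct (Nat.leb_spec r e); [| reflexivity].
    assert (Hc : cc (sqrt eta) (sqrt (1 - eta)) r (e - r) 0 = sqrt (1 - eta) ^ r * sqrt eta ^ (e - r)).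
    { unfold cc, conv. rewrite sn0. unfold alpha, beta. simpl Nat.leb. cbv iota. rewrite !C_n0, !Nat.sub_0_r. simpl pow. ring. }
    rewrite bs_cc by lia. rewrite Hc. set (k := (e - r)%nat) in *.
    rewrite th_eq by auto. fold x. unfold v.
    rewrite sq_helper; try lra.
    unfold Binomial.C. replace (r + k)%nat with e by (unfold k; lia). replace (e - r)%nat with k by auto.
    rewrite Rpow_mult_distr. simpl fact. rewrite !mult_INR. simpl INR. field. repeat split; try apply INR_fact_neq_0; lra.
    apply Rdiv_le_0_compat. apply pos_INR. rewrite mult_INR. apply Rmult_lt_0_compat; apply INR_fact_lt_0.
  - apply series_shift. unfold R0v. fold x. apply (is_series_scal _ (fun k => Binomial.C (r + k) r * (eta * x) ^ k)).
    apply NB. split. apply Rmult_le_pos; lra. apply Rle_lt_trans with x; try lra.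
    rewrite <- (Rmult_1_l x) at 2. apply Rmult_le_compat_r; lra.
Qed.

Lemma Qr eta nB r : 0 <= eta <= 1 -> 0 <= nB ->
  is_series (fun a => if (1 <=? a)%nat then Series (wr eta nB r a) else 0) (1 - R0v eta nB r).
Proof. intros He HnB.
  destruct (rows_diag (wr eta nB r) 1) as [_ Hrows].
  - intros; apply wr_nonneg; auto.
  - apply (is_series_ext (fun M => if (r <=? M)%nat then th nB (M - r)%nat else 0)).
    intros; symmetry; apply Dg_wr; auto. apply series_shift. apply th_geo; auto.
  - replace (R0v eta nB r) with (Series (wr eta nB r 0)).
    apply (series_drop0 (fun a => Series (wr eta nB r a))). auto.
    apply is_series_unique. apply wr0; auto.
Qed.


Lemma series_single (f : nat -> R) r : (forall i, i <> r -> f i = 0) -> is_series f (f r).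
Proof. intros H. apply is_series_lim. apply (is_lim_seq_ext_loc (fun _ => f r)).
  exists r. intros n Hn. rewrite (sn_single f r) by auto. destruct (Nat.leb_spec r n); try lia. auto.
  apply is_lim_seq_const. Qed.

Lemma Series_if (b : bool) (f : nat -> R) : Series (fun e => if b then f e else 0) = if b then Series f else 0.
Proof. destruct b. reflexivity. rewrite (Series_ext _ (fun n => 0 * f n)) by (intros; ring).
  rewrite Series_scal_l. ring. Qed.

Lemma amp_sq ns r : 0 < ns -> tmsv_amp ns r * tmsv_amp ns r = th ns r.
Proof. intros H. unfold tmsv_amp. rewrite sqrt_sqrt. reflexivity. apply th_nonneg. lra. Qed.

Lemma diag_H0 ns eta nB r a e : 0 < ns ->
  apply_bs eta (init_H0 ns nB) r a e r a e = th ns r * wr eta nB 0 a e.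
Proof. intros Hns. unfold apply_bs, init_H0. rewrite <- sum_n_Reals.
  rewrite (sn_single _ 0).
  - simpl Nat.leb. cbv iota. rewrite <- sum_n_Reals. rewrite (sn_single _ 0).
    + simpl Nat.leb. cbv iota. rewrite !Nat.sub_0_r.
      assert (HR : reduced_R ns r r = th ns r).
      { unfold reduced_R. rewrite <- amp_sq by auto. apply is_series_unique.
        replace (tmsv_amp ns r * tmsv_amp ns r) with (tmsv ns r r r r).
        apply (series_single (fun a => tmsv ns r a r a)). intros i Hi. unfold tmsv. destruct (Nat.eqb_spec r i); try lia. ring.
        unfold tmsv. rewrite Nat.eqb_refl. auto. }
      rewrite HR. unfold wr, vac, thermal. simpl. rewrite !Nat.sub_0_r, Nat.eqb_refl. unfold th. ring.
    + intros i Hi. unfold vac. destruct (Nat.eqb_spec i 0); try lia. simpl. ring.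
  - intros i Hi. rewrite <- sum_n_Reals. apply sn_zero. intros j. unfold vac.
    destruct (Nat.eqb_spec i 0); try lia. simpl. ring.
Qed.

Lemma diag_H1 ns eta nB r a e : 0 < ns ->
  apply_bs eta (init_H1 ns nB) r a e r a e = th ns r * wr eta nB r a e.
Proof. intros Hns. unfold apply_bs, init_H1. rewrite <- sum_n_Reals.
  rewrite (sn_single _ r).
  - unfold wr. destruct (Nat.leb_spec r (a + e)); [| rring].
    rewrite <- sum_n_Reals. rewrite (sn_single _ r).
    + destruct (Nat.leb_spec r (a + e)); [| lia].
      unfold tmsv, thermal. rewrite !Nat.eqb_refl. rewrite <- amp_sq by auto. unfold th. rring.
    + intros i Hi. unfold tmsv. destruct (Nat.eqb_spec r i); try lia. ring.
  - intros i Hi. rewrite <- sum_n_Reals. apply sn_zero. intros j. unfold tmsv.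
    destruct (Nat.eqb_spec r i); try lia. ring.
Qed.


Lemma Series_zero : Series (fun _ => 0) = 0.
Proof. apply (Series_if false (fun _ => 0)). Qed.

Lemma pCC_gen ns eta nB (rho : Op3) (k : nat -> nat) : 0 <= eta <= 1 -> 0 <= nB ->
  (forall r a e, rho r a e r a e = th ns r * wr eta nB (k r) a e) ->
  p_CC rho = Series (fun r => if (1 <=? r)%nat then th ns r * (1 - R0v eta nB (k r)) else 0).
Proof. intros He HnB Hd. unfold p_CC. apply Series_ext. intros r.
  rewrite (Series_ext _ (fun a => if (1 <=? r)%nat then th ns r * (if (1 <=? a)%nat then Series (wr eta nB (k r) a) else 0) else 0)).
  - destruct (1 <=? r)%nat. rewrite Series_scal_l. f_equal. apply is_series_unique. apply Qr; auto.
    apply Series_zero.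
  - intros a. rewrite (Series_ext _ (fun e => if andb (1 <=? r)%nat (1 <=? a)%nat then th ns r * wr eta nB (k r) a e else 0)).
    rewrite Series_if. destruct (1 <=? r)%nat; destruct (1 <=? a)%nat; simpl; try rewrite Series_scal_l; try ring.
    intros e. rewrite Hd. auto.
Qed.

Lemma R0v_eq eta nB r : 0 <= eta <= 1 -> 0 <= nB ->
  R0v eta nB r = ((1 - eta) / (1 - eta * (nB / (1 + nB)))) ^ r * / (1 + (1 - eta) * nB).
Proof. intros He HnB. pose proof (x_bound nB HnB).
  assert (0 < 1 - eta * (nB / (1 + nB))).
  { assert (eta * (nB / (1 + nB)) <= nB / (1 + nB)). rewrite <- (Rmult_1_l (nB / (1 + nB))) at 2.
    apply Rmult_le_compat_r; lra. lra. }
  unfold R0v, Rdiv. rewrite Rpow_mult_distr, pow_inv. simpl pow. field.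
  repeat split; try apply pow_nonzero; try lra.
  replace (1 + (1 - eta) * nB) with ((1 + nB) * (1 - eta * (nB * / (1 + nB)))) by (field; lra).
  apply Rmult_integral_contrapositive; split; lra.
Qed.

Lemma pow_le1 (x : R) n : 0 <= x <= 1 -> 0 <= x ^ n <= 1.
Proof. intros H. induction n. simpl; lra. simpl. split. apply Rmult_le_pos; lra. nra. Qed.

Theorem mainTheorem4 (ns eta nB : R)
  (Hns : 0 < ns) (Heta0 : 0 <= eta) (Heta1 : eta <= 1) (HnB : 0 <= nB) :
  let N := (1 - eta) * nB in
  p_CC (apply_bs eta (init_H0 ns nB)) = (1 - 1 / (1 + ns)) * (1 - 1 / (1 + N)) /\
  p_CC (apply_bs eta (init_H1 ns nB)) >=
    (1 - 1 / (1 + ns)) * (1 - 1 / (1 + N) + eta / (1 + N) ^ 2).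
Proof. intros N. assert (He : 0 <= eta <= 1) by lra.
  pose proof (x_bound nB HnB) as Hx.
  assert (Hd : 0 < 1 - eta * (nB / (1 + nB))).
  { assert (eta * (nB / (1 + nB)) <= nB / (1 + nB)). rewrite <- (Rmult_1_l (nB / (1 + nB))) at 2.
    apply Rmult_le_compat_r; lra. lra. }
  set (rho := (1 - eta) / (1 - eta * (nB / (1 + nB)))).
  assert (Hrho : 0 <= rho <= 1).
  { unfold rho. split. apply Rdiv_le_0_compat; lra. apply Rmult_le_reg_r with (1 - eta * (nB / (1 + nB))). lra.
    unfold Rdiv. rewrite Rmult_assoc, Rinv_l by lra. assert (eta * (nB / (1 + nB)) <= eta).
    rewrite <- (Rmult_1_r eta) at 2. apply Rmult_le_compat_l; lra. lra. }
  assert (HN : 0 < 1 + N) by (unfold N; nra).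
  assert (Hth : is_series (fun r => if (1 <=? r)%nat then th ns r else 0) (1 - 1 / (1 + ns))).
  { replace (1 / (1 + ns)) with (th ns 0). apply series_drop0. apply th_geo. lra.
    unfold th. simpl. field. lra. }
  assert (HS : Series (fun r => if (1 <=? r)%nat then th ns r else 0) = 1 - 1 / (1 + ns)) by (apply is_series_unique; exact Hth).
  assert (Hth0 : forall r, 0 <= th ns r) by (intros; apply th_nonneg; lra).
  split.
  - rewrite (pCC_gen ns eta nB _ (fun _ => 0%nat)); auto.
    2: intros; apply diag_H0; auto.
    rewrite (Series_ext _ (fun r => (1 - R0v eta nB 0) * (if (1 <=? r)%nat then th ns r else 0))).
    rewrite Series_scal_l, HS.
    rewrite R0v_eq by auto. simpl pow. unfold N in *. field. split; lra.
    intros r. destruct (1 <=? r)%nat; ring.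
  - rewrite (pCC_gen ns eta nB _ (fun r => r)); auto.
    2: intros; apply diag_H1; auto.
    apply Rle_ge.
    assert (HR : forall r, R0v eta nB r = rho ^ r * / (1 + N)) by (intros; rewrite R0v_eq; auto).
    assert (HiN : 0 < / (1 + N) <= 1).
    { split. apply Rinv_0_lt_compat; lra. rewrite <- Rinv_1. apply Rinv_le_contravar; unfold N; nra. }
    apply Rle_trans with (Series (fun r => (1 - R0v eta nB 1) * (if (1 <=? r)%nat then th ns r else 0))).
    + rewrite Series_scal_l, HS. rewrite HR.
      unfold rho. simpl pow. unfold N. right. field.
      repeat split; try lra. unfold N in HN. lra.
    + apply Series_le.
      * intros r. destruct (Nat.leb_spec 1 r).
        -- rewrite !HR. destruct r. lia. simpl pow.
           pose proof (pow_le1 rho r Hrho). specialize (Hth0 (S r)).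
           assert (rho * / (1 + N) <= 1) by nra. assert (rho * rho ^ r * / (1 + N) <= rho * / (1 + N)) by (apply Rmult_le_compat_r; nra). split. apply Rmult_le_pos; lra. nra.
        -- lra.
      * apply (@ex_series_le R_AbsRing R_CompleteNormedModule _ (fun r => if (1 <=? r)%nat then th ns r else 0)).
        intros r. change norm with Rabs. destruct (1 <=? r)%nat.
        rewrite HR. pose proof (pow_le1 rho r Hrho). specialize (Hth0 r).
        assert (rho ^ r * / (1 + N) <= 1) by nra. assert (0 <= rho ^ r * / (1 + N)) by nra. rewrite Rabs_right. nra. apply Rle_ge, Rmult_le_pos; lra. rewrite Rabs_R0; lra.
        exists (1 - 1 / (1 + ns)). auto.
Qed.
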